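(* Let $(X,d)$ be a geometrically doubling metric space and let $\mathscr{D}=\{Q^k_\alpha\}$ be a system of dyadic cubes with parameters $\delta\in(0,1)$ and $0<c_1\le C_1<\infty$. Let $m\in\mathbb{Z}$ and let $Q^m_\alpha\in\mathscr{D}$ be a dyadic cube of generation $m$. Then both $Q^m_\alpha$ and $X\setminus Q^m_\alpha$ are d-plump with parameters $\delta$, $m$, $b_0=c_1$ and $B_0=c_1+C_1$. In particular (provided $\operatorname{diam}(Q^m_\alpha)>0$), $Q^m_\alpha$ is plump with parameters $$b=\frac{\delta c_1}{c_1+C_1}\quad\text{and}\quad R=\frac{c_1+C_1}{2\delta C_1}\operatorname{diam}(Q^m_\alpha).$$
   Context: For $x\in X$ and $r>0$, $B(x,r)=\{y\in X: d(y,x)<r\}$. $(X,d)$ is geometrically doubling if there is $A_1\in\mathbb{N}$ such that every ball $B(x,r)$ can be covered by at most $A_1$ balls of radius $r/2$. A system of dyadic cubes with parameters $\delta\in(0,1)$ and $0<c_1\le C_1<\infty$ is a family of Borel sets $Q^k_\alpha$, $k\in\mathbb{Z}$, $\alpha\in I(k)$ (with $I(k)$ at most countable), together with points $x^k_\alpha\in X$, such that: (i) for every $k$, $X=\bigcup_{\alpha\in I(k)}Q^k_\alpha$ as a disjoint union; (ii) if $\ell\ge k$ then either $Q^\ell_\beta\subseteq Q^k_\alpha$ or $Q^\ell_\beta\cap Q^k_\alpha=\emptyset$; (iii) $B(x^k_\alpha,c_1\delta^k)\subseteq Q^k_\alpha\subseteq B(x^k_\alpha,C_1\delta^k)=:B(Q^k_\alpha)$;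 (iv) if $\ell\ge k$ and $Q^\ell_\beta\subseteq Q^k_\alpha$ then $B(Q^\ell_\beta)\subseteq B(Q^k_\alpha)$. $Q^k_\alpha$ is called a dyadic cube of generation $k$. A set $E\subseteq X$ is plump with parameters $R>0$, $b\in(0,1)$ if for all $y\in E$ and $0<r\le R$ there is $z\in X$ with $B(z,br)\subseteq B(y,r)\cap E$. A set $E$ is d-plump with parameters $\delta\in(0,1)$, $m\in\mathbb{Z}$, $0<b_0\le B_0<\infty$ if for all $y\in E$ and all integers $k\ge m$ there is $z\in X$ with $B(z,b_0\delta^k)\subseteq B(y,B_0\delta^k)\cap E$. *)

(* Defs.v *)
From Stdlib Require Import Reals List ZArith.
Open Scope R_scope.

Definition ball {X : Type} (d : X -> X -> R) (x : X) (r : R) : X -> Prop :=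
  fun y => d y x < r.

Definition is_metric {X : Type} (d : X -> X -> R) : Prop :=
  (forall x y, 0 <= d x y) /\
  (forall x y, d x y = 0 <-> x = y) /\
  (forall x y, d x y = d y x) /\
  (forall x y z, d x z <= d x y + d y z).

Definition geom_doubling {X : Type} (d : X -> X -> R) : Prop :=
  exists A1 : nat, forall (x : X) (r : R), 0 < r ->
    exists l : list X, (length l <= A1)%nat /\
      forall y, ball d x r y -> exists z, In z l /\ ball d z (r / 2) y.

Definition is_open {X : Type} (d : X -> X -> R) (U : X -> Prop) : Prop :=
  forall x, U x -> exists r, 0 < r /\ forall y, ball d x r y -> U y.

(* Borel sets: members of every sigma-algebra (of extensional predicates)
   containing the open sets. *)
Definition borel {X : Type} (d : X -> X -> R) (A : X -> Prop) : Prop :=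
  forall F : (X -> Prop) -> Prop,
    (forall B C : X -> Prop, (forall x, B x <-> C x) -> F B -> F C) ->
    (forall U, is_open d U -> F U) ->
    (forall B, F B -> F (fun x => ~ B x)) ->
    (forall S : nat -> X -> Prop, (forall n, F (S n)) -> F (fun x => exists n, S n x)) ->
    F A.

Definition dyadic_system {X : Type} (d : X -> X -> R) (I : Z -> Type)
  (Q : forall k : Z, I k -> X -> Prop) (xc : forall k : Z, I k -> X)
  (delta c1 C1 : R) : Prop :=
  (0 < delta < 1) /\ (0 < c1) /\ (c1 <= C1) /\
  (forall k, exists f : I k -> nat, forall a b, f a = f b -> a = b) /\
  (forall k a, borel d (Q k a)) /\
  (forall k (y : X), exists a, Q k a y /\ forall b, Q k b y -> b = a) /\
  (forall (k l : Z) (a : I k) (b : I l), (k <= l)%Z ->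
     (forall y, Q l b y -> Q k a y) \/ (forall y, ~ (Q l b y /\ Q k a y))) /\
  (forall k a y, ball d (xc k a) (c1 * powerRZ delta k) y -> Q k a y) /\
  (forall k a y, Q k a y -> ball d (xc k a) (C1 * powerRZ delta k) y) /\
  (forall (k l : Z) (a : I k) (b : I l), (k <= l)%Z ->
     (forall y, Q l b y -> Q k a y) ->
     forall y, ball d (xc l b) (C1 * powerRZ delta l) y ->
               ball d (xc k a) (C1 * powerRZ delta k) y).

Definition plump {X : Type} (d : X -> X -> R) (E : X -> Prop) (Rr b : R) : Prop :=
  0 < Rr /\ 0 < b < 1 /\
  forall y, E y -> forall r, 0 < r <= Rr ->
    exists z, forall w, ball d z (b * r) w -> ball d y r w /\ E w.

Definition d_plump {X : Type} (d : X -> X -> R) (E : X -> Prop)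
  (delta : R) (m : Z) (b0 B0 : R) : Prop :=
  0 < delta < 1 /\ 0 < b0 <= B0 /\
  forall y, E y -> forall k : Z, (m <= k)%Z ->
    exists z, forall w, ball d z (b0 * powerRZ delta k) w ->
                        ball d y (B0 * powerRZ delta k) w /\ E w.

Definition is_diam {X : Type} (d : X -> X -> R) (E : X -> Prop) (D : R) : Prop :=
  is_lub (fun t => exists y z, E y /\ E z /\ t = d y z) D.

(* Main.v *)
Require Import Defs.
From Stdlib Require Import Reals ZArith Lra Lia.
Open Scope R_scope.

Lemma find_n (delta t : R) : 0 < delta < 1 -> 0 < t <= 1 ->
  exists n : nat, delta ^ (S n) <= t <= delta ^ n.
Proof.
  intros Hd Ht.
  assert (HN : exists N, delta ^ N <= t).
  { destruct (pow_lt_1_zero delta) with (y := t) as [N HN].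
    - rewrite Rabs_right; lra.
    - lra.
    - exists N. specialize (HN N (le_n N)).
      rewrite Rabs_right in HN. lra. apply Rle_ge, pow_le; lra. }
  destruct HN as [N HN]. revert HN. induction N as [|N IH]; intros HN.
  - exists 0%nat. simpl in *. lra.
  - destruct (Rle_lt_dec t (delta ^ N)) as [h|h].
    + exists N. lra.
    + apply IH. lra.
Qed.

Theorem proposition3p1 (X : Type) (d : X -> X -> R) (I : Z -> Type)
  (Q : forall k : Z, I k -> X -> Prop) (xc : forall k : Z, I k -> X)
  (delta c1 C1 : R) :
  is_metric d -> geom_doubling d -> dyadic_system d I Q xc delta c1 C1 ->
  forall (m : Z) (a : I m),
    d_plump d (Q m a) delta m c1 (c1 + C1) /\
    d_plump d (fun y => ~ Q m a y) delta m c1 (c1 + C1) /\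
    (forall D : R, is_diam d (Q m a) D -> 0 < D ->
       plump d (Q m a) ((c1 + C1) / (2 * delta * C1) * D) (delta * c1 / (c1 + C1))).
Proof.
  intros [Hnn [Heq [Hsym Htri]]] _ Hdy m a.
  destruct Hdy as (Hd & Hc1 & HC1 & _ & _ & Hi & Hii & Hiii1 & Hiii2 & _).
  assert (Gen : forall k y, exists b, Q k b y /\
     forall w, ball d (xc k b) (c1 * powerRZ delta k) w ->
       ball d y ((c1 + C1) * powerRZ delta k) w /\ Q k b w).
  { intros k y. destruct (Hi k y) as [b [Hb _]]. exists b. split; [exact Hb|].
    intros w Hw. split; [|now apply Hiii1].
    pose proof (Hiii2 k b y Hb) as Hy. unfold ball in *.
    pose proof (Htri w (xc k b) y). rewrite (Hsym (xc k b) y) in H. lra. }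
  assert (Din : d_plump d (Q m a) delta m c1 (c1 + C1)).
  { split; [exact Hd|split; [lra|]]. intros y Hy k Hk.
    destruct (Gen k y) as [b [Hb Hw]]. exists (xc k b). intros w Hw'.
    destruct (Hw w Hw') as [H1 H2]. split; [exact H1|].
    destruct (Hii m k a b Hk) as [Hs|Hs].
    - now apply Hs.
    - exfalso. now apply (Hs y). }
  split; [exact Din|split].
  - split; [exact Hd|split; [lra|]]. intros y Hy k Hk.
    destruct (Gen k y) as [b [Hb Hw]]. exists (xc k b). intros w Hw'.
    destruct (Hw w Hw') as [H1 H2]. split; [exact H1|].
    destruct (Hii m k a b Hk) as [Hs|Hs].
    + exfalso. now apply Hy, Hs.
    + intro Hq. now apply (Hs w).
  - intros D HD HDpos.
    assert (Hpm : 0 < powerRZ delta m) by (apply powerRZ_lt; lra).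
    assert (HDle : D <= 2 * C1 * powerRZ delta m).
    { apply HD. intros t [y [z [Hy [Hz ->]]]].
      pose proof (Hiii2 m a y Hy). pose proof (Hiii2 m a z Hz). unfold ball in *.
      pose proof (Htri y (xc m a) z). rewrite (Hsym (xc m a) z) in H1. lra. }
    assert (HC1pos : 0 < C1) by lra.
    assert (Hcc : 0 < c1 + C1) by lra.
    split; [|split].
    + apply Rmult_lt_0_compat; [|lra]. unfold Rdiv.
      apply Rmult_lt_0_compat; [lra|]. apply Rinv_0_lt_compat.
      apply Rmult_lt_0_compat; lra.
    + split.
      * unfold Rdiv. apply Rmult_lt_0_compat; [apply Rmult_lt_0_compat; lra|].
        apply Rinv_0_lt_compat; lra.
      * apply Rmult_lt_reg_r with (c1 + C1); [lra|].
        unfold Rdiv. rewrite Rmult_assoc, Rinv_l; nra.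
    + intros y Hy r [Hr0 Hr].
      set (pm1 := powerRZ delta (m - 1)).
      assert (Hpm1 : powerRZ delta m = pm1 * delta).
      { unfold pm1. replace m with ((m - 1) + 1)%Z at 1 by lia.
        rewrite powerRZ_add by lra. simpl. ring. }
      assert (Hp1 : 0 < pm1) by (apply powerRZ_lt; lra).
      set (t := r / (c1 + C1) / pm1).
      assert (Hrb : r <= (c1 + C1) * pm1).
      { assert (Hr2 : (c1 + C1) / (2 * delta * C1) * D <= (c1 + C1) * pm1).
        { unfold Rdiv. rewrite Rinv_mult.
          assert (0 < / delta) by (apply Rinv_0_lt_compat; lra).
          assert (0 < / C1) by (apply Rinv_0_lt_compat; lra).
          assert (Hx : D * / 2 * / delta * / C1 <= pm1).
          { apply Rle_trans with (2 * C1 * powerRZ delta m * / 2 * / delta * / C1).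
            - repeat apply Rmult_le_compat_r; lra.
            - rewrite Hpm1. field_simplify; lra. }
          replace ((c1 + C1) * (/ (2 * delta) * / C1) * D) with ((c1+C1) * (D * /2 * /delta * /C1)).
          apply Rmult_le_compat_l; lra.
          rewrite Rinv_mult. ring. }
        lra. }
      assert (Ht : 0 < t <= 1).
      { unfold t. split.
        - unfold Rdiv. repeat apply Rmult_lt_0_compat; try apply Rinv_0_lt_compat; lra.
        - apply Rmult_le_reg_r with pm1; [lra|]. unfold Rdiv.
          field_simplify; try lra. apply Rmult_le_reg_r with (c1 + C1); [lra|].
          field_simplify; lra. }
      destruct (find_n delta t Hd Ht) as [n [Hn1 Hn2]].
      set (k := (m + Z.of_nat n)%Z).
      assert (Hk : powerRZ delta k = pm1 * delta ^ S n).
      { unfold k, pm1. replace (m + Z.of_nat n)%Z with ((m - 1) + Z.of_nat (S n))%Z by lia.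
        rewrite powerRZ_add by lra. now rewrite <- pow_powerRZ. }
      assert (Hkm : (m <= k)%Z) by (unfold k; lia).
      destruct Din as [_ [_ Dp]].
      destruct (Dp y Hy k Hkm) as [z Hz]. exists z. intros w Hw.
      assert (Hdn : 0 < delta ^ n) by (apply pow_lt; lra).
      assert (Hts : t * pm1 * (c1 + C1) = r) by (unfold t; field; lra).
      assert (E1 : delta * c1 / (c1 + C1) * r <= c1 * powerRZ delta k).
      { rewrite Hk, <- Hts. simpl.
        replace (delta * c1 / (c1 + C1) * (t * pm1 * (c1 + C1))) with ((delta * c1 * pm1) * t) by (field; lra).
        assert (0 <= delta * c1 * pm1) by (repeat apply Rmult_le_pos; lra).
        replace (c1 * (pm1 * (delta * delta ^ n))) with ((delta * c1 * pm1) * delta ^ n) by ring.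
        apply Rmult_le_compat_l; lra. }
      assert (E2 : (c1 + C1) * powerRZ delta k <= r).
      { rewrite Hk, <- Hts.
        replace ((c1 + C1) * (pm1 * delta ^ S n)) with ((pm1 * (c1 + C1)) * delta ^ S n) by ring.
        replace (t * pm1 * (c1 + C1)) with ((pm1 * (c1 + C1)) * t) by ring.
        apply Rmult_le_compat_l; [nra|lra]. }
      assert (Hw' : ball d z (c1 * powerRZ delta k) w) by (unfold ball in *; lra).
      destruct (Hz w Hw') as [H1 H2]. split; [unfold ball in *; lra|exact H2].
Qed.
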